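(* Let $G$ be an affine algebraic group over an algebraically closed field such that $G^0$ is semisimple. If $g\in G$ is isolated in $G$, then the semisimple part $g_s$ of $g$ has finite order.
   Context: For an algebraic group $H$, $H^0$ is its identity component, $\mathcal{Z}_H$ its center and $Z_H(x)$ the centralizer of $x$; $g=g_sg_u$ is the Jordan decomposition. An element $g\in G$ is isolated in $G$ if $(\mathcal{Z}_{Z_G(g_s)^0}\cap Z_G(g_u))^0=(\mathcal{Z}_{G^0}\cap Z_G(g))^0$. *)

(* Defs.v *)
From HB Require Import structures.
From mathcomp Require Import all_boot all_order all_algebra.
From mathcomp.multinomials Require Import mpoly.
Set Implicit Arguments. Unset Strict Implicit. Unset Printing Implicit Defensive.
Import GRing.Theory.
Local Open Scope ring_scope.

(* Linear algebraic groups are realized as Zariski-closed subgroups of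
   GL_{n+1}(F), F algebraically closed.  Subsets of matrices are Prop-valued
   predicates. *)

Section AlgGroups.
Variables (F : closedFieldType) (n : nat).
Local Notation M := 'M[F]_n.+1.
Definition mset := M -> Prop.

Definition mx_eval (p : {mpoly F[n.+1 * n.+1]}) (A : M) : F :=
  p.@[fun i => mxvec A 0 i].

(* Zariski-closed subsets of GL_{n+1}(F) (subspace topology from M_{n+1}(F)) *)
Definition zariski_closed (X : mset) : Prop :=
  (forall A, X A -> A \in unitmx) /\
  exists S : {mpoly F[n.+1 * n.+1]} -> Prop,
    forall A, A \in unitmx -> (X A <-> forall p, S p -> mx_eval p A = 0).

Definition zariski_connected (Y : mset) : Prop :=
  ~ exists C1 C2 : mset,
      [/\ zariski_closed C1 /\ zariski_closed C2,
          (forall x, Y x -> C1 x \/ C2 x),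
          (exists x, Y x /\ C1 x), (exists x, Y x /\ C2 x) &
          (forall x, Y x -> C1 x -> C2 x -> False)].

Definition is_subgroup (H : mset) : Prop :=
  [/\ H 1, (forall x y, H x -> H y -> H (x * y)) &
      (forall x, H x -> H x^-1)].

Definition alg_group (G : mset) : Prop :=
  zariski_closed G /\ is_subgroup G.

Definition id_comp (H : mset) : mset :=
  fun x => exists Y : mset,
    [/\ (forall y, Y y -> H y), zariski_connected Y, Y 1 & Y x].

Definition center (H : mset) : mset :=
  fun x => H x /\ forall y, H y -> x * y = y * x.

Definition centralizer (G : mset) (x : M) : mset :=
  fun y => G y /\ y * x = x * y.

Definition setI_m (A B : mset) : mset := fun x => A x /\ B x.

Inductive gen (A : mset) : mset :=
  | gen1 : gen A 1
  | gen_in x : A x -> gen A x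
  | genM x y : gen A x -> gen A y -> gen A (x * y)
  | genV x : gen A x -> gen A x^-1.

Definition derived (H : mset) : mset :=
  gen (fun z => exists x y, [/\ H x, H y & z = x^-1 * y^-1 * x * y]).

Definition solvable_m (H : mset) : Prop :=
  exists k, forall x, iter k derived H x -> x = 1.

Definition normal_in (N H : mset) : Prop :=
  forall x h, N x -> H h -> N (h^-1 * x * h).

(* A connected algebraic group H is semisimple if its radical (the largest
   closed connected solvable normal subgroup) is trivial, i.e. every closed
   connected solvable normal subgroup is trivial. *)
Definition semisimple (H : mset) : Prop :=
  alg_group H /\ zariski_connected H /\
  forall N : mset, alg_group N -> (forall x, N x -> H x) ->
    zariski_connected N -> solvable_m N -> normal_in N H ->
    forall x, N x -> x = 1.

Definition unipotent (u : M) : Prop := exists m, (u - 1) ^+ m = 0.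

Definition jordan_decomp (g gs gu : M) : Prop :=
  [/\ g = gs * gu, gs * gu = gu * gs, gs \in unitmx,
      diagonalizable gs & unipotent gu].

Definition mset_eq (A B : mset) : Prop := forall x, A x <-> B x.

Definition isolated (G : mset) (g gs gu : M) : Prop :=
  mset_eq
    (id_comp (setI_m (center (id_comp (centralizer G gs))) (centralizer G gu)))
    (id_comp (setI_m (center (id_comp G)) (centralizer G g))).

End AlgGroups.

(* Main.v *)
Require Import Defs.
From HB Require Import structures.
From mathcomp Require Import all_boot all_order all_algebra.
From mathcomp.multinomials Require Import mpoly.
From Stdlib Require Import FunctionalExtensionality Classical.
From mathcomp Require Import zify ring.
Set Implicit Arguments. Unset Strict Implicit. Unset Printing Implicit Defensive.
Import GRing.Theory.
Local Open Scope ring_scope.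

Section PF.
Variable F : fieldType.
Variables (X : Type) (k : nat) (ev : X -> 'I_k -> F).
Definition PF (f : X -> F) := exists p : {mpoly F[k]}, forall x, f x = p.@[ev x].

Lemma PF_eq f g : PF f -> (forall x, f x = g x) -> PF g.
Proof. by move=> [p Hp] e; exists p => x; rewrite -e. Qed.
Lemma PF_const c : PF (fun _ => c).
Proof. by exists c%:MP => x; rewrite mevalC. Qed.
Lemma PF_var i : PF (fun x => ev x i).
Proof. by exists 'X_i => x; rewrite mevalXU. Qed.
Lemma PF_add f g : PF f -> PF g -> PF (fun x => f x + g x).
Proof. by move=> [p Hp] [q Hq]; exists (p + q) => x; rewrite mevalD Hp Hq. Qed.
Lemma PF_mul f g : PF f -> PF g -> PF (fun x => f x * g x).
Proof. by move=> [p Hp] [q Hq]; exists (p * q) => x; rewrite mevalM Hp Hq. Qed.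
Lemma PF_opp f : PF f -> PF (fun x => - f x).
Proof. by move=> [p Hp]; exists (- p) => x; rewrite mevalN Hp. Qed.
Lemma PF_sub f g : PF f -> PF g -> PF (fun x => f x - g x).
Proof. by move=> Hf Hg; apply: PF_add => //; apply: PF_opp. Qed.
Lemma PF_sum (I : Type) (r : seq I) (P : pred I) (f : I -> X -> F) :
  (forall i, PF (f i)) -> PF (fun x => \sum_(i <- r | P i) f i x).
Proof.
move=> Hf; elim: r => [|a r IH].
  by apply: PF_eq (PF_const 0) _ => x; rewrite big_nil.
case Pa: (P a).
  by apply: PF_eq (PF_add (Hf a) IH) _ => x; rewrite big_cons Pa.
by apply: PF_eq IH _ => x; rewrite big_cons Pa.
Qed.
Lemma PF_prod (I : Type) (r : seq I) (P : pred I) (f : I -> X -> F) :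
  (forall i, PF (f i)) -> PF (fun x => \prod_(i <- r | P i) f i x).
Proof.
move=> Hf; elim: r => [|a r IH].
  by apply: PF_eq (PF_const 1) _ => x; rewrite big_nil.
case Pa: (P a).
  by apply: PF_eq (PF_mul (Hf a) IH) _ => x; rewrite big_cons Pa.
by apply: PF_eq IH _ => x; rewrite big_cons Pa.
Qed.
Lemma PF_exp f m : PF f -> PF (fun x => f x ^+ m).
Proof.
move=> Hf; elim: m => [|m IH].
  by apply: PF_eq (PF_const 1) _ => x; rewrite expr0.
by apply: PF_eq (PF_mul Hf IH) _ => x; rewrite exprS.
Qed.
Lemma PF_meval j (w : X -> 'I_j -> F) (p : {mpoly F[j]}) :
  (forall i, PF (fun x => w x i)) -> PF (fun x => p.@[w x]).
Proof.
move=> Hw; apply: (@PF_eq (fun x => \sum_(m <- msupp p) p@_m * \prod_i w x i ^+ m i)).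
  apply: PF_sum => m; apply: PF_mul; [exact: PF_const| apply: PF_prod => i; exact: PF_exp].
by move=> x; rewrite mevalE.
Qed.

Definition PFM a b (H : X -> 'M[F]_(a, b)) := forall i j, PF (fun x => H x i j).

Lemma PFM_const a b (C : 'M[F]_(a, b)) : PFM (fun _ => C).
Proof. by move=> i j; apply: PF_const. Qed.
Lemma PFM_add a b (H1 H2 : X -> 'M[F]_(a, b)) : PFM H1 -> PFM H2 -> PFM (fun x => H1 x + H2 x).
Proof. by move=> h1 h2 i j; apply: PF_eq (PF_add (h1 i j) (h2 i j)) _ => x; rewrite mxE. Qed.
Lemma PFM_mul a b c (H1 : X -> 'M[F]_(a, b)) (H2 : X -> 'M[F]_(b, c)) :
  PFM H1 -> PFM H2 -> PFM (fun x => H1 x *m H2 x).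
Proof.
move=> h1 h2 i j; apply: (@PF_eq (fun x => \sum_l H1 x i l * H2 x l j)).
  by apply: PF_sum => l; apply: PF_mul.
by move=> x; rewrite mxE.
Qed.
Lemma PFM_scale a b (s : X -> F) (H : X -> 'M[F]_(a, b)) : PF s -> PFM H -> PFM (fun x => s x *: H x).
Proof. by move=> hs h i j; apply: PF_eq (PF_mul hs (h i j)) _ => x; rewrite mxE. Qed.
Lemma PFM_sum a b (I : Type) (r : seq I) (P : pred I) (H : I -> X -> 'M[F]_(a, b)) :
  (forall l, PFM (H l)) -> PFM (fun x => \sum_(l <- r | P l) H l x).
Proof.
move=> h i j; apply: (@PF_eq (fun x => \sum_(l <- r | P l) H l x i j)); first by apply: PF_sum => l; apply: h.
by move=> x; rewrite summxE.
Qed.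
Lemma PF_det a (H : X -> 'M[F]_a) : PFM H -> PF (fun x => \det (H x)).
Proof.
move=> h; apply: PF_sum => s; apply: PF_mul; first exact: PF_const.
by apply: PF_prod => i; apply: h.
Qed.
Lemma PFM_adj a (H : X -> 'M[F]_a) : PFM H -> PFM (fun x => \adj (H x)).
Proof.
move=> h i j; apply: PF_eq (_ : PF (fun x => cofactor (H x) j i)) _; last by move=> x; rewrite mxE.
apply: PF_mul; first exact: PF_const.
apply: PF_det => u v; apply: PF_eq (h _ _) _ => x; by rewrite !mxE.
Qed.
End PF.

Section Seqs.
Variable F : fieldType.
Implicit Types f g h : nat -> F.

Definition dlt f : nat -> F := fun k => f k.+1 - f k.
Definition nilp f := exists J, iter J dlt f = (fun _ => 0).

Lemma dlt0 : dlt (fun _ => 0) = (fun _ => 0).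
Proof. by apply: functional_extensionality => k; rewrite /dlt subr0. Qed.
Lemma iter_dlt0 J : iter J dlt (fun _ => 0) = (fun _ => 0 : F).
Proof. by elim: J => //= J ->; rewrite dlt0. Qed.
Lemma iter_dlt_add J f g : iter J dlt (fun k => f k + g k) = (fun k => iter J dlt f k + iter J dlt g k).
Proof.
elim: J => //= J ->; apply: functional_extensionality => k.
by rewrite /dlt addrACA opprD.
Qed.
Lemma iter_dlt_scale J c f : iter J dlt (fun k => c * f k) = (fun k => c * iter J dlt f k).
Proof.
elim: J => //= J ->; apply: functional_extensionality => k.
by rewrite /dlt mulrBr.
Qed.
Lemma iter_dlt_shift J f : iter J dlt (fun k => f k.+1) = (fun k => iter J dlt f k.+1).
Proof. by elim: J => //= J ->. Qed.
Lemma iter_dltS J f : iter J.+1 dlt f = iter J dlt (dlt f).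
Proof. by rewrite iterSr. Qed.
Lemma nilp_more J i f : iter J dlt f = (fun _ => 0) -> iter (i + J) dlt f = (fun _ => 0).
Proof. by move=> H; rewrite iterD H iter_dlt0. Qed.

Lemma nilp_const c : nilp (fun _ => c).
Proof. by exists 1%N; apply: functional_extensionality => k; rewrite /= /dlt subrr. Qed.
Lemma nilp_add f g : nilp f -> nilp g -> nilp (fun k => f k + g k).
Proof.
move=> [a Ha] [b Hb]; exists (a + b)%N; rewrite iter_dlt_add.
have Hf := nilp_more b Ha; have Hg := nilp_more a Hb; rewrite addnC in Hf.
rewrite Hf Hg.
by apply: functional_extensionality => k; rewrite addr0.
Qed.
Lemma nilp_scale c f : nilp f -> nilp (fun k => c * f k).
Proof.
move=> [a Ha]; exists a; rewrite iter_dlt_scale Ha.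
by apply: functional_extensionality => k; rewrite mulr0.
Qed.
Lemma nilp_shift f : nilp f -> nilp (fun k => f k.+1).
Proof. by move=> [a Ha]; exists a; rewrite iter_dlt_shift Ha. Qed.
Lemma nilp_dlt f : nilp f -> nilp (dlt f).
Proof. by move=> [a Ha]; exists a; rewrite -iter_dltS /= Ha dlt0. Qed.

Lemma iter_dlt_mul s : forall a b f g, (a + b)%N = s ->
  iter a dlt f = (fun _ => 0) -> iter b dlt g = (fun _ => 0) ->
  iter s dlt (fun k => f k * g k) = (fun _ => 0).
Proof.
have Z1 : forall f g, f = (fun _ => 0) -> (fun k => f k * g k) = (fun _ => 0 : F).
  by move=> f g ->; apply: functional_extensionality => k; rewrite mul0r.
have Z2 : forall f g, g = (fun _ => 0) -> (fun k => f k * g k) = (fun _ => 0 : F).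
  by move=> f g ->; apply: functional_extensionality => k; rewrite mulr0.
move=> a b f g Hs; elim: s a b f g Hs => [|s IH] [|a] [|b] f g // Hs Hf Hg;
  try (by rewrite (Z1 _ _ Hf) iter_dlt0); try (by rewrite (Z2 _ _ Hg) iter_dlt0); try (by move: Hs; rewrite addSn).
- rewrite -/(iter s.+1 dlt _) iter_dltS.
  have -> : dlt (fun k => f k * g k) = (fun k => dlt f k * g k.+1 + f k * dlt g k).
    apply: functional_extensionality => k; rewrite /dlt mulrBl mulrBr.
    by rewrite addrA subrK.
  rewrite iter_dlt_add (IH a b.+1 (dlt f) (fun k => g k.+1)) //; first last.
  + by rewrite iter_dlt_shift -/(iter b.+1 dlt g) Hg.
  + by rewrite -iter_dltS.
  + by move: Hs; rewrite addSn => -[].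
  rewrite (IH a.+1 b f (dlt g)) //; first last.
  + by rewrite -iter_dltS.
  + by move: Hs; rewrite addnS => -[].
  by apply: functional_extensionality => k; rewrite addr0.
Qed.

Lemma nilp_mul f g : nilp f -> nilp g -> nilp (fun k => f k * g k).
Proof. by move=> [a Ha] [b Hb]; exists (a + b)%N; exact: iter_dlt_mul Ha Hb. Qed.

Lemma nilp_sum (I : Type) (r : seq I) (P : pred I) (f : I -> nat -> F) :
  (forall i, nilp (f i)) -> nilp (fun k => \sum_(i <- r | P i) f i k).
Proof.
move=> Hf; elim: r => [|a r IH].
  have -> : (fun k => \sum_(i <- [::] | P i) f i k) = (fun _ => 0).
    by apply: functional_extensionality => k; rewrite big_nil.
  exact: nilp_const.
case Pa: (P a).
  have -> : (fun k => \sum_(i <- a :: r | P i) f i k) = (fun k => f a k + \sum_(i <- r | P i) f i k).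
    by apply: functional_extensionality => k; rewrite big_cons Pa.
  exact: nilp_add.
have -> : (fun k => \sum_(i <- a :: r | P i) f i k) = (fun k => \sum_(i <- r | P i) f i k).
  by apply: functional_extensionality => k; rewrite big_cons Pa.
exact: IH.
Qed.
Lemma nilp_prod (I : Type) (r : seq I) (P : pred I) (f : I -> nat -> F) :
  (forall i, nilp (f i)) -> nilp (fun k => \prod_(i <- r | P i) f i k).
Proof.
move=> Hf; elim: r => [|a r IH].
  have -> : (fun k => \prod_(i <- [::] | P i) f i k) = (fun _ => 1).
    by apply: functional_extensionality => k; rewrite big_nil.
  exact: nilp_const.
case Pa: (P a).
  have -> : (fun k => \prod_(i <- a :: r | P i) f i k) = (fun k => f a k * \prod_(i <- r | P i) f i k).
    by apply: functional_extensionality => k; rewrite big_cons Pa.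
  exact: nilp_mul.
have -> : (fun k => \prod_(i <- a :: r | P i) f i k) = (fun k => \prod_(i <- r | P i) f i k).
  by apply: functional_extensionality => k; rewrite big_cons Pa.
exact: IH.
Qed.
Lemma nilp_exp f m : nilp f -> nilp (fun k => f k ^+ m).
Proof.
move=> Hf; elim: m => [|m IH].
  have -> : (fun k => f k ^+ 0) = (fun _ => 1) by apply: functional_extensionality.
  exact: nilp_const.
have -> : (fun k => f k ^+ m.+1) = (fun k => f k * f k ^+ m).
  by apply: functional_extensionality => k; rewrite exprS.
exact: nilp_mul.
Qed.
Lemma nilp_binom j : nilp (fun k => ('C(k, j))%:R).
Proof.
exists j.+1; elim: j => [|j IH].
  by apply: functional_extensionality => k; rewrite /= /dlt !bin0 subrr.
rewrite iter_dltS.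
have -> : dlt (fun k => ('C(k, j.+1))%:R) = (fun k => ('C(k, j))%:R :> F).
  by apply: functional_extensionality => k; rewrite /dlt binS natrD addrAC subrr add0r.
exact: IH.
Qed.

Lemma geom_nilp f r : nilp f -> r != 1 -> (forall k, f k.+1 = r * f k) -> forall k, f k = 0.
Proof.
move=> [J HJ] r1 Hr.
have fE : forall k, f k = r ^+ k * f 0%N.
  by elim=> [|k IH]; rewrite ?expr0 ?mul1r // Hr IH exprS mulrA.
have dE : forall i, iter i dlt f = (fun k => (r - 1) ^+ i * (r ^+ k * f 0%N)).
  elim=> [|i IH] /=; first by apply: functional_extensionality => k; rewrite expr0 mul1r fE.
  rewrite IH; apply: functional_extensionality => k; rewrite /dlt -mulrBr.
  have -> : r ^+ k.+1 * f 0%N - r ^+ k * f 0%N = (r - 1) * (r ^+ k * f 0%N).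
    by rewrite exprS mulrBl mul1r mulrA.
  by rewrite exprSr !mulrA.
move: (congr1 (fun h => h 0%N) HJ); rewrite dE /= expr0 mul1r => /eqP.
rewrite mulf_eq0 expf_eq0 subr_eq0 (negPf r1) andbF /= => /eqP f0 k.
by rewrite fE f0 mulr0.
Qed.

Definition Lop (w : F) h : nat -> F := fun k => h k.+1 - w * h k.
Definition Tv (v w : F) f : nat -> F := fun k => v * f k.+1 - w * f k.

Lemma iter_Lop_sum J w (I : Type) (r : seq I) (h : I -> nat -> F) :
  iter J (Lop w) (fun k => \sum_(i <- r) h i k) = (fun k => \sum_(i <- r) iter J (Lop w) (h i) k).
Proof.
elim: J => //= J ->; apply: functional_extensionality => k.
by rewrite /Lop mulr_sumr -sumrB.
Qed.
Lemma iter_Lop0 J w : iter J (Lop w) (fun _ => 0) = (fun _ => 0).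
Proof.
elim: J => //= J ->; apply: functional_extensionality => k.
by rewrite /Lop mulr0 subr0.
Qed.
Lemma iter_Lop_geom J w v f :
  iter J (Lop w) (fun k => v ^+ k * f k) = (fun k => v ^+ k * iter J (Tv v w) f k).
Proof.
elim: J => //= J ->; apply: functional_extensionality => k.
by rewrite /Lop /Tv mulrBr exprS !mulrA [w * _]mulrC [v ^+ k * v]mulrC.
Qed.
Lemma iter_Tv_same J w f : iter J (Tv w w) f = (fun k => w ^+ J * iter J dlt f k).
Proof.
elim: J => [|J IH] /=; first by apply: functional_extensionality => k; rewrite mul1r.
rewrite IH; apply: functional_extensionality => k.
by rewrite /Tv /dlt mulrBr !mulrA -!exprS.
Qed.
Lemma nilp_Tv v w f : nilp f -> nilp (Tv v w f).
Proof.
move=> Hf; have -> : Tv v w f = (fun k => v * f k.+1 + (- w) * f k).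
  by apply: functional_extensionality => k; rewrite /Tv mulNr.
by apply: nilp_add; apply: nilp_scale => //; apply: nilp_shift.
Qed.
Lemma nilp_iter_Tv J v w f : nilp f -> nilp (iter J (Tv v w) f).
Proof. by elim: J => //= J IH Hf; apply: nilp_Tv; apply: IH. Qed.
Lemma Tv_inj v w f : v != 0 -> v != w -> nilp f -> (forall k, Tv v w f k = 0) -> forall k, f k = 0.
Proof.
move=> v0 vw Hf HT; apply: (geom_nilp (r := w / v)) => //.
  apply: contra vw => /eqP H; apply/eqP.
  by move: H => /(congr1 (fun x => x * v)); rewrite mul1r mulfVK.
move=> k; move: (HT k); rewrite /Tv => /eqP; rewrite subr_eq0 => /eqP H.
by apply: (mulfI v0); rewrite H mulrA [v * _]mulrC mulfVK.
Qed.
Lemma iter_Tv_inj J v w f : v != 0 -> v != w -> nilp f ->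
  (forall k, iter J (Tv v w) f k = 0) -> forall k, f k = 0.
Proof.
elim: J f => [|J IH] f v0 vw Hf H //.
rewrite iterSr in H; have := IH _ v0 vw (nilp_Tv v w Hf) H.
exact: Tv_inj.
Qed.

Lemma indep (V : seq F) : forall R : F -> nat -> F, uniq V ->
  (forall v, v \in V -> v != 0) -> (forall v, v \in V -> nilp (R v)) ->
  (forall k, \sum_(v <- V) v ^+ k * R v k = 0) -> forall v, v \in V -> forall k, R v k = 0.
Proof.
elim: V => [|w V IH] R //= /andP[wV uV] nz nl Hsum.
have [J HJ] := nl w (mem_head _ _).
have Hs : (fun k => \sum_(v <- w :: V) v ^+ k * R v k) = (fun _ => 0).
  by apply: functional_extensionality.
have := congr1 (iter J (Lop w)) Hs.
rewrite iter_Lop_sum iter_Lop0 => /(congr1 (fun h => h)) HL.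
have H1 : forall k, \sum_(v <- V) v ^+ k * iter J (Tv v w) (R v) k = 0.
  move=> k; move: (congr1 (fun h => h k) HL) => /=.
  rewrite big_cons iter_Lop_geom iter_Tv_same HJ mulr0 mulr0 add0r => E; apply: etrans E.
  by apply: eq_bigr => v _; rewrite iter_Lop_geom.
have HV : forall v, v \in V -> forall k, R v k = 0.
  move=> v vV; apply: (iter_Tv_inj (J := J) (v := v) (w := w)).
  - by apply: nz; rewrite in_cons vV orbT.
  - by apply: contra wV => /eqP <-.
  - by apply: nl; rewrite in_cons vV orbT.
  - apply: (IH (fun v => iter J (Tv v w) (R v))) => //.
    + by move=> u uV1; apply: nz; rewrite in_cons uV1 orbT.
    + by move=> u uV1; apply: nilp_iter_Tv; apply: nl; rewrite in_cons uV1 orbT.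
have Hw : forall k, R w k = 0.
  move=> k; move: (Hsum k); rewrite big_cons big_seq big1 ?addr0.
    by move/eqP; rewrite mulf_eq0 expf_eq0 (negPf (nz w (mem_head _ _))) andbF /= => /eqP.
  by move=> v vV; rewrite HV ?mulr0.
move=> v; rewrite in_cons => /orP[/eqP -> //|]; exact: HV.
Qed.
End Seqs.

Section Group.
Variable F : fieldType.
Lemma group_sum (T : eqType) (s : seq T) (val : T -> F) (G : T -> F) :
  \sum_(m <- s) G m = \sum_(v <- undup (map val s)) \sum_(m <- s | val m == v) G m.
Proof.
under [RHS]eq_bigr => v _ do rewrite big_mkcond.
rewrite exchange_big /= [LHS]big_seq [RHS]big_seq; apply: eq_bigr => m ms.
rewrite -big_mkcond -big_filter.
have -> : [seq i <- undup [seq val i | i <- s] | val m == i] = [:: val m].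
  rewrite (eq_filter (a2 := pred1 (val m))); last by move=> x; rewrite /= eq_sym.
  apply: filter_pred1_uniq; first exact: undup_uniq.
  by rewrite mem_undup; apply/mapP; exists m => //.
by rewrite big_seq1.
Qed.
End Group.

Section PFmx.
Variables (F : closedFieldType) (X : Type) (k : nat) (ev : X -> 'I_k -> F).
Lemma PF_mxvec a b (H : X -> 'M[F]_(a, b)) : PFM ev H -> forall i, PF ev (fun x => mxvec (H x) 0 i).
Proof.
move=> h i; case/mxvec_indexP: i => u v.
by apply: PF_eq (h u v) _ => x; rewrite mxvecE.
Qed.
Lemma PF_mx_eval n (H : X -> 'M[F]_n.+1) (p : {mpoly F[n.+1 * n.+1]}) :
  PFM ev H -> PF ev (fun x => mx_eval p (H x)).
Proof. by move=> h; apply: PF_meval; apply: PF_mxvec. Qed.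
Lemma PFM_diag n (f : 'I_n -> X -> F) : (forall i, PF ev (f i)) ->
  PFM ev (fun x => diag_mx (\row_i f i x)).
Proof.
move=> h a b; case: (eqVneq a b) => [<-|ab].
  by apply: PF_eq (h a) _ => x; rewrite !mxE eqxx.
by apply: PF_eq (PF_const ev 0) _ => x; rewrite !mxE (negPf ab).
Qed.
End PFmx.

Section Core.
Variables (F : closedFieldType) (n : nat).
Local Notation N := n.+1.
Definition dmx (mu : 'I_N -> F) : 'M[F]_N := diag_mx (\row_i mu i).
Variables (P : 'M[F]_N) (W : 'M[F]_N) (M : nat).
Definition Phi (mu : 'I_N -> F) (z : 'I_M -> F) : 'M[F]_N :=
  invmx P *m dmx mu *m P *m \sum_(l < M) z l *: W ^+ l.
Definition join (mu : 'I_N -> F) (z : 'I_M -> F) : 'I_(N + M) -> F :=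
  fun i => match split i with inl a => mu a | inr b => z b end.
Definition Psi (v : 'I_(N + M) -> F) := Phi (fun i => v (lshift M i)) (fun l => v (rshift N l)).
Lemma join_l mu z i : join mu z (lshift M i) = mu i.
Proof. by rewrite /join; have /= -> := @unsplitK N M (inl i). Qed.
Lemma join_r mu z i : join mu z (rshift N i) = z i.
Proof. by rewrite /join; have /= -> := @unsplitK N M (inr i). Qed.
Lemma Psi_join mu z : Psi (join mu z) = Phi mu z.
Proof.
rewrite /Psi; congr Phi; apply: functional_extensionality => i.
  exact: join_l.
exact: join_r.
Qed.
Lemma PFM_Psi : PFM (fun v : 'I_(N + M) -> F => v) Psi.
Proof.
apply: PFM_mul; last first.
  by apply: PFM_sum => l; apply: PFM_scale; [apply: PF_var | apply: PFM_const].
apply: PFM_mul; last exact: PFM_const.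
apply: PFM_mul; first exact: PFM_const.
by apply: PFM_diag => i; apply: PF_var.
Qed.

Variable lam : 'I_N -> F.
Hypothesis lam0 : forall i, lam i != 0.
Definition binom k : 'I_M -> F := fun l => ('C(k, l))%:R.
Definition pw k : 'I_N -> F := fun i => lam i ^+ k.
Definition compat (mu : 'I_N -> F) := forall a b : 'I_N -> nat,
  \prod_i lam i ^+ a i = \prod_i lam i ^+ b i -> \prod_i mu i ^+ a i = \prod_i mu i ^+ b i.

Lemma core (p : {mpoly F[N * N]}) :
  (forall k, mx_eval p (Phi (pw k) (binom k)) = 0) ->
  forall mu, compat mu -> mx_eval p (Phi mu (binom 0)) = 0.
Proof.
move=> Hk mu Hmu.
have [q Hq] := PF_mx_eval p PFM_Psi.
have expand : forall mu z, mx_eval p (Phi mu z) = \sum_(m <- msupp q)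
    (\prod_i mu i ^+ m (lshift M i)) * (q@_m * \prod_j z j ^+ m (rshift N j)).
  move=> mu' z; rewrite -Psi_join Hq mevalE; apply: eq_bigr => m _.
  rewrite big_split_ord /=; under eq_bigr do rewrite join_l.
  under [X in _ * (_ * X) = _]eq_bigr do rewrite join_r.
  by rewrite mulrCA.
pose val (m : 'X_{1.. N + M}) := \prod_i lam i ^+ m (lshift M i).
pose f (m : 'X_{1.. N + M}) k := q@_m * \prod_j binom k j ^+ m (rshift N j).
pose V := undup (map val (msupp q)).
pose R v k := \sum_(m <- msupp q | val m == v) f m k.
have HR : forall v, v \in V -> forall k, R v k = 0.
  apply: indep.
  - exact: undup_uniq.
  - move=> v; rewrite mem_undup => /mapP [m _ ->].
    by apply/prodf_neq0 => i _; rewrite expf_neq0.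
  - move=> v _; apply: nilp_sum => m; apply: nilp_mul; first exact: nilp_const.
    by apply: nilp_prod => j; apply: nilp_exp; apply: nilp_binom.
  - move=> k; apply: (etrans _ (Hk k)); rewrite expand (group_sum _ val).
    apply: eq_bigr => v _; rewrite mulr_sumr; apply: eq_big => // m /eqP <-.
    rewrite /val /pw -prodrXl; congr (_ * _); apply: eq_bigr => i _.
    by rewrite exprAC.
rewrite expand (group_sum _ val) big_seq big1 // => v.
rewrite mem_undup => /mapP [m0 m0s ->].
transitivity (\sum_(m <- msupp q | val m == val m0) (\prod_i mu i ^+ m0 (lshift M i)) * f m 0%N).
  apply: eq_bigr => m /eqP Hm; congr (_ * _).
  exact: Hmu.
rewrite -mulr_sumr.
have := HR (val m0); rewrite /R => ->; first by rewrite mulr0.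
by rewrite mem_undup; apply/mapP; exists m0.
Qed.
End Core.

Section Lattice.
Variables (F : fieldType) (N : nat) (lam : 'I_N -> F).
Hypothesis lam0 : forall i, lam i != 0.

Definition inL (d : 'I_N -> int) := \prod_i lam i ^ d i = 1.

Lemma prodz (r : seq 'I_N) (x : 'I_N -> F) (a : int) :
  \prod_(i <- r) x i ^ a = (\prod_(i <- r) x i) ^ a.
Proof.
elim: r => [|i r IH]; first by rewrite !big_nil exp1rz.
by rewrite !big_cons IH expfzMl.
Qed.

Lemma inL_lin d d' a b : inL d -> inL d' -> inL (fun i => a * d i + b * d' i).
Proof.
rewrite /inL => H1 H2.
under eq_bigr do rewrite expfzDr // [a * _]mulrC [b * _]mulrC -!exprz_exp.
by rewrite big_split /= !prodz H1 H2 !exp1rz mulr1.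
Qed.
Lemma inL0 : inL (fun _ => 0).
Proof. by rewrite /inL big1. Qed.

Definition rowq (d : 'I_N -> int) : 'rV[rat]_N := \row_i (d i)%:~R.

Definition Inv (S : 'M[rat]_N) := forall x : 'rV[rat]_N, (x <= S)%MS ->
  exists K : int, K != 0 /\ exists d, inL d /\ K%:~R *: x = rowq d.

Lemma Inv0 : Inv 0.
Proof.
move=> x; rewrite submx0 => /eqP ->; exists 1; split => //.
exists (fun _ => 0); split; first exact: inL0.
by apply/rowP => i; rewrite !mxE mulr0.
Qed.

Lemma Inv_add S d0 : Inv S -> inL d0 -> Inv (S + rowq d0)%MS.
Proof.
move=> HS Hd0 x /sub_addsmxP [u ->].
have [K [K0 [d [Hd HK]]]] := HS (u.1 *m S) (submxMl _ _).
set a := u.2 0 0.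
have Ha : u.2 *m rowq d0 = a *: rowq d0 by rewrite [u.2]mx11_scalar mul_scalar_mx.
exists (K * denq a); split; first by rewrite mulf_neq0 ?denq_neq0.
exists (fun i => denq a * d i + (K * numq a) * d0 i); split; first exact: inL_lin.
rewrite Ha scalerDr intrM [K%:~R * _]mulrC -scalerA HK.
apply/rowP => i; rewrite !mxE intrD !intrM numqE; ring.
Qed.

Lemma max_span : exists S, Inv S /\ forall d, inL d -> (rowq d <= S)%MS.
Proof.
apply: NNPP => H.
have step : forall S, Inv S -> exists d, inL d /\ ~~ (rowq d <= S)%MS.
  move=> S IS; apply: NNPP => H2; apply: H; exists S; split => // d Hd.
  by apply: NNPP => H3; apply: H2; exists d; split => //; apply/negP.
have big : forall k, exists S, Inv S /\ (k <= \rank S)%N.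
  elim=> [|k [S [IS Hk]]]; first by exists 0; split => //; exact: Inv0.
  have [d [Hd Hn]] := step S IS.
  exists (S + rowq d)%MS; split; first exact: Inv_add.
  apply: (leq_ltn_trans Hk).
  have := mxrank_leqif_sup (addsmxSl S (rowq d)).
  move=> [] le /= eqf.
  rewrite ltn_neqAle le andbT eqf.
  apply: contra Hn => sub; apply: submx_trans sub.
  exact: addsmxSr.
have [S [_ HS]] := big N.+1.
by have := rank_leq_col S; rewrite leqNgt HS.
Qed.

Lemma lattice (j0 : 'I_N) (Hj0 : forall m, (0 < m)%N -> lam j0 ^+ m != 1) :
  exists c : 'I_N -> int, (exists j, c j != 0) /\ forall d, inL d -> \sum_i c i * d i = 0.
Proof.
have [S [IS HS]] := max_span.
pose e0 : 'I_N -> int := fun i => ((i == j0) : nat)%:Z.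
have ej0 : ~~ (rowq e0 <= S)%MS.
  apply/negP => /IS [K [K0 [d [Hd HK]]]].
  have dE : forall i, d i = K * e0 i.
    move=> i; move/rowP: HK => /(_ i); rewrite !mxE => /eqP.
    by rewrite -intrM eqr_int => /eqP <-.
  move: Hd; rewrite /inL (bigD1 j0) //= big1; last first.
    by move=> i ij; rewrite dE /e0 (negPf ij) mulr0 expr0z.
  rewrite mulr1 dE /e0 eqxx mulr1.
  case: K K0 {HK dE} => m K0 Hm.
    have m0 : (0 < m)%N by rewrite lt0n; apply: contra K0 => /eqP ->.
    by move: (Hj0 m m0); rewrite -[lam j0 ^+ m]/(lam j0 ^ (Posz m)) Hm eqxx.
  move: Hm; rewrite NegzE -exprnN => /eqP; rewrite invr_eq1 => Hm.
  by move: (Hj0 m.+1 (ltn0Sn _)); rewrite Hm.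
have rk : (\rank S < N)%N.
  rewrite ltn_neqAle rank_leq_col andbT; apply: contra ej0 => full.
  exact: submx_full.
have Kn0 : kermx S^T != 0.
  by rewrite -mxrank_eq0 mxrank_ker mxrank_tr subn_eq0 -ltnNge.
have [i [j Hij]] : exists i j, kermx S^T i j != 0.
  apply: NNPP => H; move/negP: Kn0; apply; apply/eqP/matrixP => i j.
  rewrite [X in _ = X]mxE; apply: NNPP => H2; apply: H; by exists i, j; apply/eqP.
pose w := row i (kermx S^T).
have wS : w *m S^T = 0 by rewrite -row_mul mulmx_ker row0.
have orth : forall d, inL d -> \sum_k (d k)%:~R * w 0 k = 0.
  move=> d /HS /submxP [y Hy].
  have : rowq d *m w^T = 0 by rewrite Hy -mulmxA -[S]trmxK -trmx_mul wS trmx0 mulmx0.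
  move/matrixP => /(_ 0 0); rewrite !mxE => E; apply: etrans E.
  by apply: eq_bigr => k _; rewrite !mxE.
pose c k := numq (w 0 k) * \prod_(l | l != k) denq (w 0 l).
pose Dall := \prod_l ((denq (w 0 l))%:~R : rat).
have cE : forall k, (c k)%:~R = w 0 k * Dall.
  move=> k; rewrite /c intrM numqE /Dall [in RHS](bigD1 k) //= -mulrA; congr (_ * _).
  by rewrite rmorph_prod.
exists c; split.
  exists j; rewrite /c mulf_neq0 //.
    by rewrite numq_eq0 /w mxE.
  by apply/prodf_neq0 => l _; rewrite denq_neq0.
move=> d Hd; apply/eqP; rewrite -(eqr_int rat) rmorph_sum /=.
under eq_bigr do rewrite intrM cE mulrC mulrA.
by rewrite -mulr_suml orth // mul0r.
Qed.
End Lattice.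

Section Torus.
Variables (F : closedFieldType) (n : nat).
Local Notation N := n.+1.

Lemma matinvE (A : 'M[F]_N) : A^-1 = invmx A. Proof. by []. Qed.
Lemma matmulE (A B : 'M[F]_N) : A * B = A *m B. Proof. by []. Qed.
Lemma matunitE (A : 'M[F]_N) : (A \is a GRing.unit) = (A \in unitmx). Proof. by []. Qed.
Lemma mat1E : (1 : 'M[F]_N) = 1%:M. Proof. by []. Qed.

Lemma dmx_mul (a b : 'I_N -> F) : dmx a *m dmx b = dmx (fun i => a i * b i).
Proof.
apply/matrixP => i j; rewrite /dmx mul_diag_mx !mxE.
by case: (i == j); rewrite ?mulr1n ?mulr0n ?mulr0.
Qed.
Lemma dmx1 : dmx (fun _ => 1) = 1%:M :> 'M[F]_N.
Proof. by apply/matrixP => i j; rewrite /dmx !mxE. Qed.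
Lemma dmxE (a : 'I_N -> F) i j : dmx a i j = a i *+ (i == j).
Proof. by rewrite /dmx !mxE. Qed.

Variables (P : 'M[F]_N) (c : 'I_N -> int).
Hypothesis Pu : P \in unitmx.

Definition At (t : F) := invmx P *m dmx (fun i => t ^ c i) *m P.
Definition Tset : 'M[F]_N -> Prop := fun B => exists2 t, t != 0 & B = At t.

Lemma conj_mul (X Y : 'M[F]_N) : (invmx P *m X *m P) *m (invmx P *m Y *m P) = invmx P *m (X *m Y) *m P.
Proof. by rewrite !mulmxA (mulmxK Pu) -!mulmxA. Qed.

Lemma At_mul t s : t != 0 -> s != 0 -> At t *m At s = At (t * s).
Proof.
move=> t0 s0; rewrite /At conj_mul dmx_mul; congr (_ *m _ *m _); congr dmx.
by apply: functional_extensionality => i; rewrite expfzMl.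
Qed.
Lemma At1 : At 1 = 1%:M.
Proof.
rewrite /At; have -> : (fun i => (1 : F) ^ c i) = (fun _ => 1).
  by apply: functional_extensionality => i; rewrite exp1rz.
by rewrite dmx1 mulmx1 mulVmx.
Qed.
Lemma At_inv t : t != 0 -> At t *m At t^-1 = 1%:M.
Proof. by move=> t0; rewrite At_mul ?invr_eq0 // mulfV // At1. Qed.
Lemma At_unit t : t != 0 -> At t \in unitmx.
Proof. by move=> t0; case: (mulmx1_unit (At_inv t0)). Qed.
Lemma At_invmx t : t != 0 -> invmx (At t) = At t^-1.
Proof.
move=> t0; have u := At_unit t0.
by rewrite -[RHS]mul1mx -(mulVmx u) -mulmxA At_inv // mulmx1.
Qed.
Lemma Tset_unit B : Tset B -> B \in unitmx.
Proof. by case=> t t0 ->; apply: At_unit. Qed.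
Lemma Tset1 : Tset 1.
Proof. by exists 1; rewrite ?oner_eq0 // At1. Qed.
Lemma Tset_mul A B : Tset A -> Tset B -> Tset (A *m B).
Proof.
by move=> [t t0 ->] [s s0 ->]; exists (t * s); rewrite ?mulf_neq0 ?At_mul.
Qed.
Lemma Tset_inv A : Tset A -> Tset (invmx A).
Proof. by move=> [t t0 ->]; exists t^-1; rewrite ?invr_eq0 ?At_invmx. Qed.

Lemma poly_all_root (Q : {poly F}) : (forall x, Q.[x] = 0) -> Q = 0.
Proof.
move=> H; apply: NNPP => /eqP Q0.
have sz : size (1 + 'X * Q) != 1.
  rewrite addrC size_addl mulrC size_mulX // ?size_poly1.
    by rewrite eqSS size_poly_eq0.
  by rewrite ltnS lt0n size_poly_eq0.
have [x] := closed_rootP _ sz; rewrite /root hornerD hornerC mulrC hornerMX H mul0r addr0.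
by rewrite oner_eq0.
Qed.

Lemma prod_exprz (t : F) (I : Type) (r : seq I) (z : I -> int) : t != 0 ->
  \prod_(i <- r) t ^ z i = t ^ (\sum_(i <- r) z i).
Proof.
move=> t0; elim: r => [|a r IH]; first by rewrite !big_nil expr0z.
by rewrite !big_cons IH expfzDr.
Qed.

Lemma At_laurent (p : {mpoly F[N * N]}) : exists (Q : {poly F}) (K : nat),
  forall t, t != 0 -> Q.[t] = t ^+ K * mx_eval p (At t).
Proof.
pose H (mu : 'I_N -> F) := invmx P *m dmx mu *m P.
have PH : PFM (fun mu : 'I_N -> F => mu) H.
  apply: PFM_mul; last exact: PFM_const.
  apply: PFM_mul; first exact: PFM_const.
  by apply: PFM_diag => i; apply: PF_var.
have [q Hq] := PF_mx_eval p PH.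
pose e (m : 'X_{1.. N}) := \sum_i c i * (m i)%:Z.
pose K := \max_(m <- msupp q) `|e m|%N.
have HK : forall m, m \in msupp q -> (0 <= e m + K%:Z)%R.
  move=> m ms; have : (`|e m| <= K)%N by apply: (@leq_bigmax_seq _ (msupp q) xpredT (fun m => `|e m|%N) m ms).
  lia.
exists (\sum_(m <- msupp q) q@_m *: 'X^((absz (e m + K%:Z)))), K => t t0.
rewrite Hq mevalE horner_sum mulr_sumr big_seq [RHS]big_seq; apply: eq_bigr => m ms.
rewrite hornerZ hornerXn mulrCA; congr (_ * _).
have -> : t ^+ (absz (e m + K%:Z)) = t ^ (e m + K%:Z).
  by rewrite -[t ^+ _]/(t ^ (Posz (absz (e m + K%:Z)))) gez0_abs // HK.
rewrite expfzDr // mulrC; congr (_ * _).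
rewrite /e -prod_exprz //; apply: eq_bigr => i _.
by rewrite -[(t ^ c i) ^+ m i]/((t ^ c i) ^ (Posz (m i))) exprz_exp.
Qed.

Lemma closed_dich (C : 'M[F]_N -> Prop) : zariski_closed C ->
  (forall t, t != 0 -> C (At t)) \/
  exists2 Q : {poly F}, Q != 0 & forall t, t != 0 -> C (At t) -> Q.[t] = 0.
Proof.
move=> [_ [S HS]].
case: (classic (exists p, S p /\ exists2 t0, t0 != 0 & mx_eval p (At t0) != 0)).
  move=> [p [Sp [t0 t00 nz]]]; right.
  have [Q [K HQ]] := At_laurent p.
  exists Q.
    apply/eqP => Q0; move: (HQ t0 t00); rewrite Q0 horner0 => /esym /eqP.
    by rewrite mulf_eq0 expf_eq0 (negPf t00) andbF (negPf nz).
  move=> t tn0 Ct; rewrite HQ //.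
  by have := (HS _ (At_unit tn0)).1 Ct p Sp => ->; rewrite mulr0.
move=> H; left => t t0; apply/(HS _ (At_unit t0)) => p Sp.
apply: NNPP => H2; apply: H; exists p; split => //; exists t => //.
exact/eqP.
Qed.

Lemma Tset_connected : zariski_connected Tset.
Proof.
move=> [C1 [C2 [[cl1 cl2] cover [x1 [T1 C1x]] [x2 [T2 C2x]] disj]]].
case: (closed_dich cl1) => [all1|[Q1 Q10 HQ1]].
  by case: (T2) => t t0 Ex; apply: (disj x2) => //; rewrite Ex; apply: all1.
case: (closed_dich cl2) => [all2|[Q2 Q20 HQ2]].
  by case: (T1) => t t0 Ex; apply: (disj x1) => //; rewrite Ex; apply: all2.
have : 'X * Q1 * Q2 = 0.
  apply: poly_all_root => x; rewrite !hornerM hornerX.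
  case: (eqVneq x 0) => [->|x0]; first by rewrite !mul0r.
  have Tx : Tset (At x) by exists x.
  case: (cover _ Tx) => Cx; first by rewrite HQ1 // mulr0 mul0r.
  by rewrite HQ2 // mulr0.
by apply/eqP; rewrite !mulf_neq0 // polyX_eq0.
Qed.
End Torus.

Section Closure.
Variables (F : closedFieldType) (n : nat).
Local Notation N := n.+1.
Local Notation ev := (fun (B : 'M[F]_N) (i : 'I_(N * N)) => mxvec B 0 i).

Definition PFmat (f : 'M[F]_N -> F) := exists p, forall B, f B = mx_eval p B.
Lemma PFmatP f : PF ev f -> PFmat f.
Proof. by move=> [p Hp]; exists p. Qed.
Lemma PFM_id : PFM ev (fun B : 'M[F]_N => B).
Proof. by move=> i j; apply: PF_eq (PF_var ev (mxvec_index i j)) _ => B; rewrite mxvecE. Qed.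

Lemma mxvecZ' (a : F) (X : 'M[F]_N) i : mxvec (a *: X) 0 i = a * mxvec X 0 i.
Proof. by case/mxvec_indexP: i => u v; rewrite !mxvecE mxE. Qed.

Lemma inv_poly (p : {mpoly F[N * N]}) : exists K : nat, exists p',
  forall B, B \in unitmx -> mx_eval p' B = \det B ^+ K * mx_eval p (invmx B).
Proof.
pose K := \max_(m <- msupp p) mdeg m.
have HK : forall m, m \in msupp p -> (mdeg m <= K)%N.
  by move=> m ms; apply: (@leq_bigmax_seq _ (msupp p) xpredT mdeg m ms).
pose f (B : 'M[F]_N) := \sum_(m <- msupp p) p@_m * (\det B ^+ (K - mdeg m) * \prod_i (mxvec (\adj B) 0 i) ^+ m i).
have [p' Hp'] : PFmat f.
  apply: PFmatP; apply: PF_sum => m; apply: PF_mul; first exact: PF_const.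
  apply: PF_mul; first by apply: PF_exp; apply: PF_det; apply: PFM_id.
  apply: PF_prod => i; apply: PF_exp; apply: PF_mxvec; apply: PFM_adj; apply: PFM_id.
exists K, p' => B Bu; rewrite -Hp' /f /mx_eval mevalE mulr_sumr big_seq [RHS]big_seq.
apply: eq_bigr => m ms.
have dB : \det B != 0 by rewrite -unitfE -unitmxE.
have E : \det B ^+ K * (\det B)^-1 ^+ mdeg m = \det B ^+ (K - mdeg m).
  by rewrite -{1}(subnK (HK m ms)) exprD -mulrA -exprMn mulfV // expr1n mulr1.
rewrite /invmx Bu; under [in RHS]eq_bigr do rewrite mxvecZ' exprMn.
rewrite big_split /= prodrXr -mdegE -E [RHS]mulrCA; congr (_ * _); by rewrite mulrA.
Qed.

Variable T : 'M[F]_N -> Prop.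
Hypotheses (Tunit : forall A, T A -> A \in unitmx) (T1 : T 1%:M)
  (Tmul : forall A B, T A -> T B -> T (A *m B)) (Tinv : forall A, T A -> T (invmx A))
  (Tconn : zariski_connected T).

Definition Tc : 'M[F]_N -> Prop := fun B =>
  B \in unitmx /\ forall p, (forall A, T A -> mx_eval p A = 0) -> mx_eval p B = 0.

Lemma T_Tc A : T A -> Tc A.
Proof. by move=> TA; split; [apply: Tunit | move=> p; apply]. Qed.

Lemma Tc_closed : zariski_closed Tc.
Proof.
split; first by move=> A [].
exists (fun p => forall A, T A -> mx_eval p A = 0) => A Au; split; first by case.
by move=> H; split.
Qed.

Lemma Tc_sub (C : 'M[F]_N -> Prop) : zariski_closed C -> (forall A, T A -> C A) ->
  forall B, Tc B -> C B.
Proof.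
move=> [Cu [S HS]] TC B [Bu HB]; apply/(HS _ Bu) => p Sp; apply: HB => A TA.
by apply: (HS _ (Tunit TA)).1 => //; apply: TC.
Qed.

Lemma Tc_mulT x B : T x -> Tc B -> Tc (x *m B).
Proof.
move=> Tx [Bu HB]; split; first by rewrite unitmx_mul Tunit.
move=> p Hp.
have [p' Hp'] : PFmat (fun B => mx_eval p (x *m B)).
  by apply: PFmatP; apply: PF_mx_eval; apply: PFM_mul; [apply: PFM_const | apply: PFM_id].
rewrite Hp'; apply: HB => A TA; rewrite -Hp'; apply: Hp; exact: Tmul.
Qed.
Lemma Tc_mul A B : Tc A -> Tc B -> Tc (A *m B).
Proof.
move=> [Au HA] TB; split; first by rewrite unitmx_mul Au; case: TB.
move=> p Hp.
have [p' Hp'] : PFmat (fun A => mx_eval p (A *m B)).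
  by apply: PFmatP; apply: PF_mx_eval; apply: PFM_mul; [apply: PFM_id | apply: PFM_const].
rewrite Hp'; apply: HA => C TC; rewrite -Hp'.
by case: (Tc_mulT TC TB) => _ H; apply: H.
Qed.
Lemma Tc_inv B : Tc B -> Tc (invmx B).
Proof.
move=> [Bu HB]; split; first by rewrite unitmx_inv.
move=> p Hp; have [K [p' Hp']] := inv_poly p.
have dB : \det B != 0 by rewrite -unitfE -unitmxE.
have H : mx_eval p' B = 0.
  apply: HB => A TA; rewrite Hp' ?Tunit // Hp ?mulr0 //; exact: Tinv.
move: H; rewrite Hp' // => /eqP; rewrite mulf_eq0 expf_eq0 (negPf dB) andbF /=.
by move/eqP.
Qed.

Lemma Tc_connected : zariski_connected Tc.
Proof.
move=> [C1 [C2 [[cl1 cl2] cover [x1 [T1x C1x]] [x2 [T2x C2x]] disj]]].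
apply: Tconn; exists C1, C2; split => //.
- by move=> x Tx; apply: cover; apply: T_Tc.
- apply: NNPP => H; apply: (disj x1) => //.
  apply: (Tc_sub cl2) => // A TA; case: (cover _ (T_Tc TA)) => // CA.
  by case: H; exists A.
- apply: NNPP => H; apply: (disj x2) => //.
  apply: (Tc_sub cl1) => // A TA; case: (cover _ (T_Tc TA)) => // CA.
  by case: H; exists A.
- by move=> x Tx; apply: disj; apply: T_Tc.
Qed.

Lemma Tc_comm (y : 'M[F]_N) : (forall A, T A -> A *m y = y *m A) ->
  forall B, Tc B -> B *m y = y *m B.
Proof.
move=> Hy B [Bu HB]; apply/matrixP => i j; apply/eqP; rewrite -subr_eq0; apply/eqP.
have [p Hp] : PFmat (fun B => (B *m y) i j - (y *m B) i j).
  apply: PFmatP; apply: PF_sub.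
    by apply: PFM_mul; [apply: PFM_id | apply: PFM_const].
  by apply: PFM_mul; [apply: PFM_const | apply: PFM_id].
rewrite Hp; apply: HB => A TA; by rewrite -Hp Hy // subrr.
Qed.
End Closure.

Lemma sum_trunc (V : zmodType) (f : nat -> V) a b :
  (forall i, (a <= i)%N -> f i = 0) -> (forall i, (b <= i)%N -> f i = 0) ->
  \sum_(i < a) f i = \sum_(i < b) f i.
Proof.
wlog ab : a b / (a <= b)%N.
  move=> H Ha Hb; case: (leqP a b) => [ab|/ltnW ba]; first exact: H.
  by symmetry; apply: H.
move=> Ha _; rewrite -!(big_mkord xpredT) (big_cat_nat (leq0n a) ab) /=.
rewrite [X in _ = _ + X]big_nat_cond [X in _ = _ + X]big1 ?addr0 // => i /andP [/andP [ai _] _].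
exact: Ha.
Qed.

Section Aux.
Variables (F : fieldType) (N : nat) (lam : 'I_N -> F) (c : 'I_N -> int).
Hypothesis lam0 : forall i, lam i != 0.
Hypothesis orth : forall d, inL lam d -> \sum_i c i * d i = 0.

Lemma sum_delta (f : 'I_N -> int) i : \sum_l f l * ((l == i) : nat)%:Z = f i.
Proof.
rewrite (bigD1 i) //= eqxx mulr1 big1 ?addr0 // => l li.
by rewrite (negPf li) mulr0.
Qed.
Lemma prod_delta i (z : int) : \prod_l lam l ^ (((l == i) : nat)%:Z * z) = lam i ^ z.
Proof.
rewrite (bigD1 i) //= eqxx mul1r big1 ?mulr1 // => l li.
by rewrite (negPf li) mul0r expr0z.
Qed.

Lemma c_eq i j : lam i = lam j -> c i = c j.
Proof.
move=> Hij; pose d l := ((l == i) : nat)%:Z - ((l == j) : nat)%:Z.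
have Ld : inL lam d.
  rewrite /inL /d; under eq_bigr do rewrite expfzDr // -[X in _ ^ (- X)]mulr1 -mulrN.
  rewrite big_split /= prod_delta (bigD1 i) //= eqxx expr1z big1 ?mulr1; last first.
    by move=> l li; rewrite (negPf li) expr0z.
  by rewrite Hij -[X in X * _]expr1z -expfzDr // addrN expr0z.
have := orth Ld; rewrite /d; under eq_bigr do rewrite mulrBr.
by rewrite sumrB !sum_delta => /eqP; rewrite subr_eq0 => /eqP.
Qed.

Lemma prod_exprz' (t : F) (I : Type) (r : seq I) (z : I -> int) : t != 0 ->
  \prod_(i <- r) t ^ z i = t ^ (\sum_(i <- r) z i).
Proof.
move=> t0; elim: r => [|a r IH]; first by rewrite !big_nil expr0z.
by rewrite !big_cons IH expfzDr.
Qed.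

Lemma compat_t (t : F) : t != 0 -> forall a b : 'I_N -> nat,
  \prod_i lam i ^+ a i = \prod_i lam i ^+ b i ->
  \prod_i (t ^ c i) ^+ a i = \prod_i (t ^ c i) ^+ b i.
Proof.
move=> t0 a b Hab.
pose d i := (a i)%:Z - (b i)%:Z.
have Ld : inL lam d.
  rewrite /inL /d; under eq_bigr do rewrite expfzDr // -exprz_inv.
  rewrite big_split /=.
  have E : forall e : 'I_N -> nat, \prod_i lam i ^ (e i)%:Z = \prod_i lam i ^+ e i by [].
  have E2 : \prod_i (lam i)^-1 ^ (b i)%:Z = (\prod_i lam i ^+ b i)^-1.
    by rewrite -prodfV; apply: eq_bigr => i _; exact: exprVn.
  rewrite E E2 Hab mulfV //; apply/prodf_neq0 => i _; exact: expf_neq0.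
have := orth Ld; rewrite /d /=; under eq_bigr do rewrite mulrBr.
move/eqP; rewrite sumrB subr_eq0 => /eqP Hs.
have F1 : forall e : 'I_N -> nat, \prod_i (t ^ c i) ^+ e i = t ^ (\sum_i c i * (e i)%:Z).
  move=> e; rewrite -prod_exprz' //; apply: eq_bigr => i _.
  by rewrite -[(t ^ c i) ^+ e i]/((t ^ c i) ^ (Posz (e i))) exprz_exp.
by rewrite !F1 Hs.
Qed.
End Aux.

Unset Implicit Arguments.
Theorem mainTheorem7 (F : closedFieldType) (n : nat) (G : 'M[F]_n.+1 -> Prop)
  (g gs gu : 'M[F]_n.+1) :
  alg_group G -> semisimple (id_comp G) -> G g ->
  jordan_decomp g gs gu -> isolated G g gs gu ->
  exists m : nat, (0 < m)%N /\ gs ^+ m = 1.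
Proof.
move=> HG Hss Gg [gE gcomm gsu [P Pu Pdiag] [m0 Hm0]] Hiso.
apply: NNPP => Hno.
have Hno' : forall m, (0 < m)%N -> gs ^+ m != 1.
  by move=> m m0'; apply/eqP => E; apply: Hno; exists m.
rewrite /similar_to conjumx // in Pdiag.
pose D := P *m gs *m invmx P.
pose lam i := D i i.
have DE : D = dmx lam.
  apply/matrixP => i j; rewrite dmxE; case: (eqVneq i j) => [<-|ij]; first by rewrite mulr1n.
  rewrite mulr0n; move/is_diag_mxP: Pdiag; apply.
  by apply: contra ij => /eqP /val_inj ->.
have gsE : gs = invmx P *m dmx lam *m P.
  by rewrite -DE /D !mulmxA (mulVmx Pu) mul1mx (mulmxKV Pu).
have lam0 : forall i, lam i != 0.
  have : dmx lam \in unitmx by rewrite -DE /D !unitmx_mul Pu gsu unitmx_inv Pu.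
  rewrite unitmxE /dmx det_diag unitfE => /prodf_neq0 H i.
  by have := H i isT; rewrite mxE.
have gspow : forall k, gs ^+ k = invmx P *m dmx (pw lam k) *m P.
  elim=> [|k IH].
    have -> : pw lam 0 = (fun _ => 1) by apply: functional_extensionality.
    by rewrite expr0 dmx1 mulmx1 mulVmx.
  rewrite exprS IH {1}gsE matmulE (conj_mul Pu) dmx_mul.
  by congr (_ *m dmx _ *m _); apply: functional_extensionality => i; rewrite /pw exprS.
have [j0 Hj0] : exists j0, forall m, (0 < m)%N -> lam j0 ^+ m != 1.
  apply: NNPP => H.
  have H' : forall j, exists m, (0 < m)%N && (lam j ^+ m == 1).
    move=> j; apply: NNPP => H2; apply: H; exists j => m m0'; apply/negP => E; apply: H2.
    by exists m; rewrite m0' E.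
  have [mf Hmf] := fin_all_exists H'.
  pose M0 := (\prod_j mf j)%N.
  have M0pos : (0 < M0)%N by rewrite prodn_gt0 // => j; case/andP: (Hmf j).
  apply/negP: (Hno' M0 M0pos); apply/eqP; rewrite gspow.
  have -> : pw lam M0 = (fun _ => 1).
    apply: functional_extensionality => i; rewrite /pw /M0 (bigD1 i) //= exprM.
    by case/andP: (Hmf i) => _ /eqP ->; exact: expr1n.
  by rewrite dmx1 mulmx1 mulVmx // eqxx.
have [c [[j1 cj1] orth]] := lattice lam0 Hj0.
pose W := gu - 1.
pose M := m0.+1.
have WM : W ^+ M = 0 by rewrite /M exprS Hm0 mulr0.
have Wl : forall l, (M <= l)%N -> W ^+ l = 0.
  by move=> l Ml; rewrite -(subnK Ml) exprD WM mulr0.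
have gupow : forall k, gu ^+ k = \sum_(l < M) (binom F k l) *: W ^+ l.
  move=> k; have -> : gu = W + 1 by rewrite /W subrK.
  rewrite exprD1n.
  under eq_bigr do rewrite -scaler_nat.
  apply: (sum_trunc (f := fun i => ('C(k, i))%:R *: W ^+ i)).
    by move=> i ki; rewrite bin_small // scale0r.
  by move=> i Mi; rewrite Wl // scaler0.
have gpow : forall k, g ^+ k = Phi P W (pw lam k) (@binom F M k).
  by move=> k; rewrite gE exprMn_comm // gspow gupow.
have [[Gu [SG HSG]] [G1 GM GV]] := HG.
have Gpow : forall k, G (g ^+ k).
  by elim=> [|k IH]; [rewrite expr0 | rewrite exprS; apply: GM].
have AtG : forall t, t != 0 -> G (At P c t).
  move=> t t0; apply/(HSG _ (At_unit c Pu t0)) => p Sp.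
  have := @core F n P W M lam lam0 p _ _ (compat_t lam0 orth t0).
  have -> : Phi P W (fun i => t ^ c i) (@binom F M 0) = At P c t.
    rewrite /Phi big_ord_recl /= big1 ?addr0.
      by rewrite /binom bin0 scale1r expr0 mulmx1.
    by move=> i _; rewrite /binom bin0n /= scale0r.
  apply => k; rewrite -gpow; apply: (HSG _ (Gu _ (Gpow k))).1 => //; exact: Gpow.
have comm_At : forall Y t, Y *m gs = gs *m Y -> At P c t *m Y = Y *m At P c t.
  move=> Y t HY.
  pose Y' := P *m Y *m invmx P.
  have YE : Y = invmx P *m Y' *m P by rewrite /Y' !mulmxA (mulVmx Pu) mul1mx (mulmxKV Pu).
  have HY' : Y' *m dmx lam = dmx lam *m Y'.
    rewrite -DE /D /Y' !mulmxA (mulmxKV Pu) -(mulmxA P Y gs) HY.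
    by rewrite (mulmxKV Pu) !mulmxA.
  clearbody Y'.
  have HY2 : Y' *m dmx (fun i => t ^ c i) = dmx (fun i => t ^ c i) *m Y'.
    apply/matrixP => i j; have := congr1 (fun A : 'M[F]_n.+1 => A i j) HY' => /= E.
    rewrite /dmx !mul_mx_diag !mul_diag_mx !mxE in E *.
    case: (eqVneq (Y' i j) 0) => [->|nz]; first by rewrite mulr0 mul0r.
    have : lam j = lam i by apply: (mulfI nz); rewrite E mulrC.
    by move/(c_eq lam0 orth) => ->; rewrite mulrC.
  by rewrite /At YE !(conj_mul Pu) HY2.
pose T := Tset P c.
have TC : forall B, T B -> centralizer G gs B.
  by move=> B [t t0 ->]; split; [exact: AtG | exact: comm_At].
have Tcent : forall B, T B -> center (id_comp G) B.
  move=> B TB.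
  have L : id_comp (setI_m (center (id_comp (centralizer G gs))) (centralizer G gu)) B.
    exists T; split => //.
    - move=> y Ty; split.
        split; first by exists T; split => //; [exact: Tset_connected | exact: Tset1].
        move=> z [Y [HYs _ _ Yz]]; have [_ zc] := HYs z Yz.
        by case: Ty => t t0 ->; apply: comm_At.
      case: Ty => t t0 ->; split; first exact: AtG.
      by apply: comm_At; move: gcomm; rewrite !matmulE.
    - exact: Tset_connected.
    - exact: Tset1.
  by have [Y [HYs _ _ YB]] := (Hiso B).1 L; case: (HYs B YB).
have Tunit := @Tset_unit F n P c Pu.
have Tmul := @Tset_mul F n P c Pu.
have Tinv := @Tset_inv F n P c Pu.
have Tconn := @Tset_connected F n P c Pu.
have T1 : T 1%:M := Tset1 c Pu.
have [[[G0u [S0 HS0]] [G01 G0M G0V]] [_ Hrad]] := Hss.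
pose Tcl := Tc T.
have TcG0 : forall B, Tcl B -> id_comp G B.
  apply: (Tc_sub Tunit) => //; first by split => //; exists S0.
  by move=> A TA; case: (Tcent A TA).
have TcC : forall B y, Tcl B -> id_comp G y -> B *m y = y *m B.
  move=> B y TB Gy; apply: (Tc_comm _ TB) => A TA.
  by case: (Tcent A TA) => _ H; apply: H.
have TT : forall A A', T A -> T A' -> A' *m A = A *m A'.
  move=> A A' [t t0 ->] [s s0 ->]; rewrite !(At_mul c Pu) //.
  by rewrite mulrC.
have TcT : forall B A, Tcl B -> T A -> B *m A = A *m B.
  by move=> B A TB TA; apply: (Tc_comm _ TB) => A' TA'; apply: TT.
have TcTc : forall B B', Tcl B -> Tcl B' -> B *m B' = B' *m B.
  move=> B B' TB TB'; apply: (Tc_comm _ TB) => A TA.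
  by symmetry; apply: TcT.
have Tclu : forall B, Tcl B -> B \in unitmx by move=> B [].
have triv : forall x, Tcl x -> x = 1.
  apply: Hrad.
  - split; first exact: Tc_closed.
    split.
    + exact: T_Tc.
    + by move=> x y Tx Ty; rewrite matmulE; apply: Tc_mul.
    + by move=> x Tx; rewrite matinvE; apply: Tc_inv.
  - exact: TcG0.
  - exact: Tc_connected.
  - exists 1%N => x /= Hx; elim: Hx => //.
    + move=> z [a [b [Ta Tb ->]]].
      have au : a \is a GRing.unit by rewrite matunitE Tclu.
      have bu : b \is a GRing.unit by rewrite matunitE Tclu.
      rewrite -!mulrA [a * b]matmulE TcTc // -matmulE.
      by rewrite (mulKr bu) (mulVr au).
    + by move=> a b _ -> _ ->; rewrite mulr1.
    + by move=> a _ ->; rewrite invr1.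
  - move=> x h Tx Gh.
    have hu : h \is a GRing.unit by rewrite matunitE G0u.
    by rewrite -mulrA [x * h]matmulE TcC // -matmulE (mulKr hu).
have AtE : forall t, t != 0 -> At P c t = 1.
  by move=> t t0; apply: triv; apply: T_Tc => //; exists t.
have [t t0 tc] : exists2 t : F, t != 0 & t ^ c j1 != 1.
  apply: NNPP => H.
  have H1 : forall t : F, t != 0 -> t ^ c j1 = 1.
    move=> t t0; apply: NNPP => H2; apply: H; exists t => //; exact/eqP.
  pose m := absz (c j1).
  have mpos : (0 < m)%N by rewrite absz_gt0.
  have Hm : forall t : F, t != 0 -> t ^+ m = 1.
    move=> t t0; move: (H1 t t0); rewrite /m.
    case: (c j1) => k //= Hk.
    by move: Hk; rewrite NegzE -exprnN => /eqP; rewrite invr_eq1 => /eqP.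
  have Q0 : 'X * ('X^m - 1) = 0 :> {poly F}.
    apply: poly_all_root => x; rewrite hornerM hornerX.
    case: (eqVneq x 0) => [->|x0]; first by rewrite mul0r.
    by rewrite hornerD hornerXn hornerN hornerC Hm // subrr mulr0.
  move/eqP: Q0; rewrite mulf_eq0 polyX_eq0 /=; apply/negP.
  apply/eqP => E; have := congr1 (fun p => p.[0]) E.
  rewrite /= hornerD hornerXn hornerN hornerC horner0 expr0n.
  by rewrite eqn0Ngt mpos sub0r => /eqP; rewrite oppr_eq0 oner_eq0.
have := AtE t t0; rewrite /At => E.
have : dmx (fun i => t ^ c i) = 1%:M.
  have -> : dmx (fun i => t ^ c i) = P *m (invmx P *m dmx (fun i => t ^ c i) *m P) *m invmx P.
    by rewrite !mulmxA (mulmxV Pu) mul1mx (mulmxK Pu).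
  by rewrite E mulmx1 mulmxV.
move/matrixP => /(_ j1 j1); rewrite dmxE !mxE eqxx mulr1n => Ht.
by move/eqP: tc; apply.
Qed.
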